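(* Let $r\ge1$ and $G\subset\mathbb{Z}_2^r$ a subgroup with $1^r\in G$, and let $S_G$ be as below. Then $Z_{S_G}:=\sum_{\mu}\dim(S_G)_\mu\,\theta_\mu=\sum_{d\in D_G}\sum_{\alpha\in C_G}2^{-|d|_l}\theta_{(d,d_\perp\alpha)}$; in particular $\dim(S_G)_{(d,d_\perp\alpha)}=[C_G^d:\Delta^d]=2^{-|d|_l}\#C_G^d$ for any $d\in D_G$, $\alpha\in C_G$, where $C_G^d=C_G\cap\mathbb{Z}_2^d$.
   Context: Identify $\mathrm{IS}=\{0,\frac12,\frac1{16}\}$ with $\{(d,c)\in\mathbb{Z}_2^2:dc=0\}$ via $0\leftrightarrow(0,0)$, $\frac12\leftrightarrow(0,1)$, $\frac1{16}\leftrightarrow(1,0)$, and componentwise $\mathrm{IS}^{(r,r)}=\mathrm{IS}^r\times\mathrm{IS}^r$ with pairs $(d,c)\in(\mathbb{Z}_2^{r+r})^2$ with $dc=0$ (componentwise product). $\theta_\mu$ ($\mu\in\mathrm{IS}^{(r,r)}$) is a formal basis of a vector space. For $c\in\mathbb{Z}_2^{r+r}$, $|c|_l,|c|_r$ are numbers of ones among first/last $r$ coordinates, $|c|=|c|_l-|c|_r$, $d_\perp=1^{2r}+d$, $\mathbb{Z}_2^d=\{\alpha:d\alpha=\alpha\}$; $A^\perp=\{\beta:|\beta a|\in2\mathbb{Z}\ \forall a\in A\}$. Construction: $\Delta(g)=(g,g)$; $D_G=\Delta G$, $C_G=D_G^\perp$. Let $C^{\rm even}_{r,r}=\{\alpha:|\alpha|\in2\mathbb{Z}\}$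 with ordered basis $(v_1,\dots,v_{2r-1})=(\Delta e_1,\dots,\Delta e_r,\tilde e_1-\tilde e_2,\dots,\tilde e_{r-1}-\tilde e_r)$, $\tilde e_i=(e_i,0)$; $\varepsilon$ is the bimultiplicative map to $\{\pm1\}$ with $\varepsilon(v_i,v_i)=(-1)^{|v_i|/2}$, $\varepsilon(v_i,v_j)=1$ ($i<j$), $(-1)^{|v_iv_j|}$ ($i>j$). $\mathbb{C}[\hat C_G]$ has basis $e_\alpha$ ($\alpha\in C_G$), $e_\alpha e_\beta=\varepsilon(\alpha,\beta)e_{\alpha+\beta}$. For $d\in\Delta\mathbb{Z}_2^r$, $\Delta^d=\mathbb{Z}_2^d\cap\Delta\mathbb{Z}_2^r$, and $\{e_\gamma\}_{\gamma\in\Delta^d}$ spans a copy of $\mathbb{C}[\Delta^d]$. For $d\in D_G$, $A_G(d)=\mathbb{C}[\hat C_G]\otimes_{\mathbb{C}[\Delta^d]}\mathbb{C}t_d$ (trivial module), $S_G=\bigoplus_{d\in D_G}A_G(d)$, graded by putting $e_\alpha\cdot t_d$ in degree $(d,d_\perp\alpha)$. *)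

(* Defs.v *)
From HB Require Import structures.
From mathcomp Require Import all_boot all_order all_algebra all_field.
Set Implicit Arguments. Unset Strict Implicit. Unset Printing Implicit Defensive.
Import GRing.Theory Num.Theory.
Local Open Scope ring_scope.

(* Z_2^{r+r} is modelled as 'rV['F_2]_(r + r): the first r coordinates are
   the "left" ones, the last r the "right" ones. *)
Section Defs.
Variable r : nat.
Local Notation V := 'rV['F_2]_(r + r).
Local Notation W := 'rV['F_2]_r.

Definition Delta (g : W) : V := row_mx g g.
Definition cmul (a b : V) : V := \row_j (a 0 j * b 0 j).
Definition wl (c : V) : nat := #|[set i : 'I_r | lsubmx c 0 i != 0]|.
Definition wr (c : V) : nat := #|[set i : 'I_r | rsubmx c 0 i != 0]|.
Definition wt (c : V) : int := (wl c)%:Z - (wr c)%:Z.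
Definition dperp (d : V) : V := const_mx 1 + d.
Definition Z2sub (d : V) : {set V} := [set a | cmul d a == a].
Definition perp (A : {set V}) : {set V} :=
  [set b | [forall a in A, (2 %| wt (cmul b a))%Z]].
Definition DG (G : {set W}) : {set V} := Delta @: G.
Definition CG (G : {set W}) : {set V} := perp (DG G).
Definition Ceven : {set V} := [set a | (2 %| wt a)%Z].

(* standard basis vectors e_i of Z_2^r (indices counted from 0) and tilde e_i *)
Definition ev (i : nat) : W := \row_(j < r) ((j : nat) == i)%:R.
Definition etil (i : nat) : V := row_mx (ev i) 0.

(* the ordered basis (v_1, ..., v_{2r-1}) of C^even, indexed by 'I_(r + (r-1)) *)
Definition vb (k : 'I_(r + r.-1)) : V :=
  match split k with
  | inl i => Delta (ev i)
  | inr k' => etil k' - etil k'.+1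
  end.
Definition vtuple : (r + r.-1).-tuple V := [tuple vb k | k < r + r.-1].

Definition eps_basis (i j : 'I_(r + r.-1)) : algC :=
  if i == j then (-1) ^ (wt (vb i) %/ 2)%Z
  else if (i < j)%N then 1
  else (-1) ^ (wt (cmul (vb i) (vb j))).

(* the bimultiplicative extension: eps(sum a_i v_i, sum b_j v_j)
   = prod_{i,j} eps(v_i,v_j)^{a_i b_j} *)
Definition eps (a b : V) : algC :=
  \prod_(i < r + r.-1) \prod_(j < r + r.-1)
     (if (coord vtuple i a != 0) && (coord vtuple j b != 0)
      then eps_basis i j else 1).

(* the ambient space C^{Z_2^{r+r}} with standard basis e_alpha;
   C[hat C_G] is the span of the e_alpha, alpha in C_G, with
   e_alpha e_beta = eps(alpha,beta) e_(alpha+beta). *)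
Definition ebas (a : V) : 'rV[algC]_#|{: V}| := delta_mx 0 (enum_rank a).

Definition DeltaD (d : V) : {set V} := Z2sub d :&: (Delta @: [set: W]).

(* A_G(d) = C[hat C_G] (x)_{C[Delta^d]} C t_d is the quotient of C[hat C_G]
   by the span of the relations (e_alpha e_gamma) (x) t_d - e_alpha (x) (e_gamma t_d)
   = eps(alpha,gamma) e_(alpha+gamma) - e_alpha, (alpha in C_G, gamma in Delta^d),
   identifying e_alpha (x) t_d with the class of e_alpha. *)
Definition Krel (G : {set W}) (d : V) :=
  (\sum_(a in CG G) \sum_(g in DeltaD d) <<eps a g *: ebas (a + g) - ebas a>>)%MS.
(* the span of the e_alpha of degree (d, c), i.e. with d_perp alpha = c *)
Definition Wdeg (G : {set W}) (d c : V) :=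
  (\sum_(a in CG G | cmul (dperp d) a == c) <<ebas a>>)%MS.
(* dimension of the degree-(d,c) component of A_G(d): the image of Wdeg in the
   quotient by Krel *)
Definition dimA (G : {set W}) (d c : V) : nat :=
  (\rank (Wdeg G d c + Krel G d)%MS - \rank (Krel G d))%N.
Definition dimS (G : {set W}) (mu : V * V) : nat :=
  if mu.1 \in DG G then dimA G mu.1 mu.2 else 0%N.
End Defs.

(* Main.v *)
Require Import Defs.
From HB Require Import structures.
From mathcomp Require Import all_boot all_order all_algebra all_field.
From mathcomp Require Import zify.
Import GRing.Theory Num.Theory.
Local Open Scope ring_scope.

Lemma sign_sq (z : int) : ((-1 : algC) ^ z) * ((-1) ^ z) = 1.
Proof.
rewrite -exprzDr ?unitrN1 //.
have -> : z + z = (2%:Z * z)%R by lia.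
by rewrite -exprz_exp -exprnP sqrrN expr1n exp1rz.
Qed.

Lemma F2cases (x : 'F_2) : x = 0 \/ x = 1.
Proof. case: x => [[|[|n]] Hn]; [left|right|]; try exact: val_inj; by []. Qed.

Lemma F2xx (x : 'F_2) : x + x = 0.
Proof. by case: (F2cases x) => ->; [rewrite addr0| apply/val_inj]. Qed.

Lemma F2sq (x : 'F_2) : x * x = x.
Proof. by case: (F2cases x) => ->; rewrite ?mulr0 ?mulr1. Qed.

Lemma F2N (x : 'F_2) : - x = x.
Proof. by apply/eqP; rewrite eq_sym -subr_eq0 opprK F2xx. Qed.

Lemma F2ne0 (x : 'F_2) : x != 0 -> x = 1.
Proof. by case: (F2cases x) => -> //; rewrite eqxx. Qed.

Lemma rowxx n (u : 'rV['F_2]_n) : u + u = 0.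
Proof. by apply/rowP => j; rewrite !mxE F2xx. Qed.

Lemma rowN n (u : 'rV['F_2]_n) : - u = u.
Proof. by apply/rowP => j; rewrite !mxE F2N. Qed.

Lemma rowadd_eq n (u v : 'rV['F_2]_n) : u + v = 0 -> u = v.
Proof. by move=> H; apply/eqP; rewrite -subr_eq0 rowN H. Qed.

Section Basics.
Variable r : nat.
Local Notation V := 'rV['F_2]_(r + r).
Local Notation W := 'rV['F_2]_r.

Lemma cmulE (a b : V) j : cmul a b 0 j = a 0 j * b 0 j.
Proof. by rewrite mxE. Qed.

Lemma cmulC (a b : V) : cmul a b = cmul b a.
Proof. by apply/rowP => j; rewrite !mxE mulrC. Qed.

Lemma cmulA (a b c : V) : cmul a (cmul b c) = cmul (cmul a b) c.
Proof. by apply/rowP => j; rewrite !mxE mulrA. Qed.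

Lemma cmulDr (a b c : V) : cmul a (b + c) = cmul a b + cmul a c.
Proof. by apply/rowP => j; rewrite !mxE mulrDr. Qed.

Lemma cmulDl (a b c : V) : cmul (b + c) a = cmul b a + cmul c a.
Proof. by apply/rowP => j; rewrite !mxE mulrDl. Qed.

Lemma cmulxx (a : V) : cmul a a = a.
Proof. by apply/rowP => j; rewrite !mxE F2sq. Qed.

Lemma cmul0r (a : V) : cmul 0 a = 0.
Proof. by apply/rowP => j; rewrite !mxE mul0r. Qed.

Lemma cmulr0 (a : V) : cmul a 0 = 0.
Proof. by apply/rowP => j; rewrite !mxE mulr0. Qed.

Lemma dperpE (d a : V) : cmul (dperp d) a = a + cmul d a.
Proof. by apply/rowP => j; rewrite !mxE mulrDl mul1r. Qed.

Definition hm (x y : W) : W := \row_j (x 0 j * y 0 j).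

Lemma DeltaEl (x : W) i : Delta x 0 (lshift r i) = x 0 i.
Proof. by rewrite /Delta row_mxEl. Qed.
Lemma DeltaEr (x : W) i : Delta x 0 (rshift r i) = x 0 i.
Proof. by rewrite /Delta row_mxEr. Qed.

Lemma cmul_Delta (x y : W) : cmul (Delta x) (Delta y) = Delta (hm x y).
Proof.
apply/rowP => j; rewrite mxE; case: (splitP j) => k Hk.
  have -> : j = lshift r k by apply/val_inj.
  by rewrite !DeltaEl mxE.
have -> : j = rshift r k by apply/val_inj.
by rewrite !DeltaEr mxE.
Qed.

Lemma DeltaDr (x y : W) : Delta (x + y) = Delta x + Delta y.
Proof. by rewrite /Delta add_row_mx. Qed.

Lemma Delta0 : Delta (0 : W) = 0.
Proof. by rewrite /Delta row_mx0. Qed.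

Definition suppW (u : W) := [set i | u 0 i != 0].

Lemma cardsum (P : pred 'I_r) : #|[set i | P i]| = (\sum_i (P i : nat))%N.
Proof.
rewrite cardsE -sum1_card big_mkcond /=; apply: eq_bigr => i _.
by rewrite unfold_in; case: (P i).
Qed.

Lemma supp_add (u y : W) :
  (#|suppW (u + y)| + 2 * #|suppW (hm u y)| = #|suppW u| + #|suppW y|)%N.
Proof.
rewrite /suppW !cardsum big_distrr /= -!big_split /=; apply: eq_bigr => i _.
rewrite !mxE.
by case: (F2cases (u 0 i)) => ->; case: (F2cases (y 0 i)) => ->;
  rewrite ?F2xx ?addr0 ?add0r ?mulr0 ?mul0r ?mulr1 ?eqxx ?oner_eq0.
Qed.

Lemma lsubD (a b : V) : lsubmx (a + b) = lsubmx a + lsubmx b.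
Proof. by apply/rowP => j; rewrite !mxE. Qed.
Lemma rsubD (a b : V) : rsubmx (a + b) = rsubmx a + rsubmx b.
Proof. by apply/rowP => j; rewrite !mxE. Qed.
Lemma lsub_cmul (a b : V) : lsubmx (cmul a b) = hm (lsubmx a) (lsubmx b).
Proof. by apply/rowP => j; rewrite !mxE. Qed.
Lemma rsub_cmul (a b : V) : rsubmx (cmul a b) = hm (rsubmx a) (rsubmx b).
Proof. by apply/rowP => j; rewrite !mxE. Qed.

Lemma wl_add (a b : V) : (wl (a + b) + 2 * wl (cmul a b) = wl a + wl b)%N.
Proof. have := supp_add (lsubmx a) (lsubmx b). by rewrite -lsubD -lsub_cmul. Qed.
Lemma wr_add (a b : V) : (wr (a + b) + 2 * wr (cmul a b) = wr a + wr b)%N.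
Proof. have := supp_add (rsubmx a) (rsubmx b). by rewrite -rsubD -rsub_cmul. Qed.

Lemma wt_add (a b : V) : wt (a + b) = wt a + wt b - 2%:Z * wt (cmul a b).
Proof.
rewrite /wt; have h1 := wl_add a b; have h2 := wr_add a b. lia.
Qed.

Lemma perpD (A : {set V}) b b' : b \in perp A -> b' \in perp A -> b + b' \in perp A.
Proof.
rewrite !inE => /forallP H /forallP H'; apply/forallP => a; apply/implyP => Ha.
have h1 := implyP (H a) Ha; have h2 := implyP (H' a) Ha.
rewrite cmulDl wt_add; apply: rpredB; first exact: rpredD.
exact: (dvdz_mulr _ (dvdzz 2)).
Qed.

Lemma wt_Delta (x : W) : wt (Delta x) = 0.
Proof. by rewrite /wt /wl /wr /Delta row_mxKl row_mxKr subrr. Qed.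

Lemma DeltaD_CG (G : {set W}) d g : g \in DeltaD d -> g \in CG G.
Proof.
rewrite inE => /andP[_ /imsetP[x _ ->]].
rewrite inE; apply/forallP => a; apply/implyP => /imsetP[y _ ->].
by rewrite cmul_Delta wt_Delta dvdz0.
Qed.

Definition pi (d b : V) : V := cmul d (Delta (lsubmx b)).
Definition rep (d b : V) : V := b + pi d b.
Definition deg (d b : V) : V := cmul (dperp d) b.

Lemma piD d a b : pi d (a + b) = pi d a + pi d b.
Proof. by rewrite /pi lsubD DeltaDr cmulDr. Qed.

Lemma inDeltaD (d g : V) : (g \in DeltaD d) = (cmul d g == g) && (g \in (@Delta r) @: [set: W]).
Proof. by rewrite !inE. Qed.

Lemma pi_in (g0 : W) b : pi (Delta g0) b \in DeltaD (Delta g0).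
Proof.
rewrite inDeltaD /pi cmulA cmulxx eqxx /= cmul_Delta.
by apply: imset_f; rewrite inE.
Qed.

Lemma pi_id d g : g \in DeltaD d -> pi d g = g.
Proof.
rewrite inDeltaD => /andP[/eqP H /imsetP[x _ Hx]].
by rewrite /pi Hx /Delta row_mxKl -/(Delta x) -Hx.
Qed.

Lemma deg_DD d g : g \in DeltaD d -> deg d g = 0.
Proof. by rewrite inDeltaD => /andP[/eqP H _]; rewrite /deg dperpE H rowxx. Qed.

Lemma degD d a b : deg d (a + b) = deg d a + deg d b.
Proof. exact: cmulDr. Qed.

Lemma pi_rep (g0 : W) b : pi (Delta g0) (rep (Delta g0) b) = 0.
Proof. by rewrite /rep piD (pi_id _ _ (pi_in _ _)) rowxx. Qed.

Lemma rep_add d a g : g \in DeltaD d -> rep d (a + g) = rep d a.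
Proof.
move=> Hg; rewrite /rep piD (pi_id _ _ Hg).
by rewrite addrACA rowxx addr0.
Qed.

Lemma rep_pi d b : rep d b + pi d b = b.
Proof. by rewrite /rep -addrA rowxx addr0. Qed.

Lemma Z2sub_deg d x : (x \in Z2sub d) = (deg d x == 0).
Proof.
rewrite inE /deg dperpE; apply/eqP/eqP => [->|H]; first exact: rowxx.
by symmetry; apply: rowadd_eq.
Qed.

Lemma vt_nth (i : 'I_(r + r.-1)) : (vtuple r)`_i = vb i.
Proof. by rewrite -tnth_nth tnth_mktuple. Qed.

Lemma vb_l (i : 'I_r) : vb (lshift r.-1 i) = Delta (ev r i).
Proof. by rewrite /vb -[lshift _ i]/(unsplit (inl _ i)) unsplitK. Qed.

Lemma vb_r (k : 'I_r.-1) : vb (rshift r k) = etil r k - etil r k.+1.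
Proof. by rewrite /vb -[rshift _ k]/(unsplit (inr _ k)) unsplitK. Qed.

Lemma evE i (j : 'I_r) : ev r i 0 j = ((j : nat) == i)%:R.
Proof. by rewrite mxE. Qed.

Lemma sum_delta (f : 'I_r -> 'F_2) (j : 'I_r) :
  \sum_(i < r) f i * ((j : nat) == i)%:R = f j.
Proof.
rewrite (bigD1 j) //= eqxx mulr1 big1 ?addr0 // => i Hij.
have -> : ((j : nat) == i) = false by apply/negbTE; rewrite eq_sym.
by rewrite mulr0.
Qed.

Lemma etilEl k (j : 'I_r) : etil r k 0 (lshift r j) = ((j : nat) == k)%:R.
Proof. by rewrite /etil row_mxEl evE. Qed.
Lemma etilEr k (j : 'I_r) : etil r k 0 (rshift r j) = 0.
Proof. by rewrite /etil row_mxEr mxE. Qed.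

Lemma free_vt : free (vtuple r).
Proof.
apply/freeP => k Hk.
have Hk' : \sum_(i < r + r.-1) k i *: vb i = 0.
  by rewrite -[RHS]Hk; apply: eq_bigr => i _; rewrite vt_nth.
rewrite big_split_ord /= in Hk'.
have Hl : forall i : 'I_r, k (lshift r.-1 i) = 0.
  move=> j; have := congr1 (fun v : V => v 0 (rshift r j)) Hk'.
  rewrite /= mxE !summxE mxE.
  rewrite [X in _ + X]big1 ?addr0; last first.
    by move=> i _; rewrite mxE vb_r mxE etilEr mxE etilEr oppr0 addr0 mulr0.
  have -> : \sum_(i < r) (k (lshift r.-1 i) *: vb (lshift r.-1 i)) 0 (rshift r j)
     = \sum_(i < r) k (lshift r.-1 i) * ((j : nat) == i)%:R.
    by apply: eq_bigr => i _; rewrite mxE vb_l DeltaEr evE.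
  by rewrite sum_delta.
have Hr : forall m (o : 'I_r.-1), (o : nat) = m -> k (rshift r o) = 0.
  elim=> [|m IH] o Ho.
  1-2: have ltor : (o < r)%N by apply: (leq_trans (ltn_ord o)); exact: leq_pred.
  1-2: have := congr1 (fun v : V => v 0 (lshift r (Ordinal ltor))) Hk'.
  1-2: rewrite /= mxE !summxE mxE.
  1-2: rewrite [X in X + _]big1 ?add0r; last by move=> i _; rewrite mxE Hl mul0r.
  1-2: rewrite (bigD1 o) //= mxE vb_r mxE etilEl mxE etilEl eqxx.
  1-2: rewrite /= (ltn_eqF (ltnSn o)) subr0 mulr1.
  1-2: rewrite big1 ?addr0 // => i Hio; rewrite mxE vb_r mxE etilEl mxE etilEl.
  1-2: have -> : ((o : nat) == i) = false by apply/negbTE; rewrite eq_sym.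
  1-2: rewrite sub0r.
  1-2: case: (eqVneq (o : nat) i.+1) => [Heq|Hne]; last by rewrite ?mulr0n oppr0 mulr0.
  - by move: Heq; rewrite Ho.
  - by rewrite (IH i) ?mul0r //; move: Heq; rewrite Ho => -[->].
move=> i; case: (splitP i) => i0 Hi.
  have -> : i = lshift r.-1 i0 by apply/val_inj.
  exact: Hl.
have -> : i = rshift r i0 by apply/val_inj.
exact: (Hr i0).
Qed.

Lemma Delta_sum (x : W) : Delta x = \sum_(i < r) x 0 i *: vb (lshift r.-1 i).
Proof.
apply/rowP => j; rewrite summxE; case: (splitP j) => j0 Hj.
  have -> : j = lshift r j0 by apply/val_inj.
  rewrite DeltaEl -[LHS](sum_delta (fun i => x 0 i)); apply: eq_bigr => i _.
  by rewrite mxE vb_l DeltaEl evE.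
have -> : j = rshift r j0 by apply/val_inj.
rewrite DeltaEr -[LHS](sum_delta (fun i => x 0 i)); apply: eq_bigr => i _.
by rewrite mxE vb_l DeltaEr evE.
Qed.

Lemma coord_Delta_r (x : W) (k : 'I_r.-1) : coord (vtuple r) (rshift r k) (Delta x) = 0.
Proof.
rewrite Delta_sum linear_sum big1 // => i _.
by rewrite linearZ /= -vt_nth coord_free ?free_vt // eq_lrshift mulr0.
Qed.

Lemma epsb_sq (i j : 'I_(r + r.-1)) : eps_basis i j * eps_basis i j = 1.
Proof.
rewrite /eps_basis; case: eqP => _; first exact: sign_sq.
by case: ifP => _; [rewrite mulr1 | exact: sign_sq].
Qed.

Lemma ifDr (E : algC) (p : bool) (y y' : 'F_2) : E * E = 1 ->
  (if p && (y + y' != 0) then E else 1) =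
  (if p && (y != 0) then E else 1) * (if p && (y' != 0) then E else 1).
Proof.
move=> HE; case: p => /=; last by rewrite mulr1.
by case: (F2cases y) => ->; case: (F2cases y') => ->;
  rewrite ?F2xx ?addr0 ?add0r ?eqxx ?oner_eq0 /= ?mulr1 ?mul1r.
Qed.

Lemma ifDl (E : algC) (p : bool) (y y' : 'F_2) : E * E = 1 ->
  (if (y + y' != 0) && p then E else 1) =
  (if (y != 0) && p then E else 1) * (if (y' != 0) && p then E else 1).
Proof. by move=> HE; rewrite ![(_ != 0) && p]andbC ifDr. Qed.

Lemma epsDr (a b b' : V) : eps a (b + b') = eps a b * eps a b'.
Proof.
rewrite /eps -big_split; apply: eq_bigr => i _; rewrite -big_split.
by apply: eq_bigr => j _; rewrite linearD; apply: ifDr; apply: epsb_sq.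
Qed.

Lemma epsDl (a a' b : V) : eps (a + a') b = eps a b * eps a' b.
Proof.
rewrite /eps -big_split; apply: eq_bigr => i _; rewrite -big_split.
by apply: eq_bigr => j _; rewrite linearD; apply: ifDl; apply: epsb_sq.
Qed.

Lemma eps0r (a : V) : eps a 0 = 1.
Proof. by rewrite /eps big1 // => i _; rewrite big1 // => j _; rewrite linear0 eqxx andbF. Qed.

Lemma eps_sq (a b : V) : eps a b * eps a b = 1.
Proof. by rewrite -epsDr rowxx eps0r. Qed.

Lemma eps_DD (x y : W) : eps (Delta x) (Delta y) = 1.
Proof.
rewrite /eps big1 // => i _; rewrite big1 // => j _.
case: (splitP i) => i0 Hi; last first.
  have -> : i = rshift r i0 by apply/val_inj.
  by rewrite coord_Delta_r eqxx.
case: (splitP j) => j0 Hj; last first.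
  have -> : j = rshift r j0 by apply/val_inj.
  by rewrite coord_Delta_r eqxx andbF.
have -> : i = lshift r.-1 i0 by apply/val_inj.
have -> : j = lshift r.-1 j0 by apply/val_inj.
suff -> : eps_basis (lshift r.-1 i0) (lshift r.-1 j0) = 1 by case: ifP.
rewrite /eps_basis !vb_l cmul_Delta !wt_Delta div0z expr0z.
by case: ifP => _ //; case: ifP.
Qed.

Lemma eps_DDs (g h : V) : g \in (@Delta r) @: [set: W] -> h \in (@Delta r) @: [set: W] ->
  eps g h = 1.
Proof. by move=> /imsetP[x _ ->] /imsetP[y _ ->]; apply: eps_DD. Qed.

Lemma CG_D (G : {set W}) d a g : a \in CG G -> g \in DeltaD d -> a + g \in CG G.
Proof. by move=> Ha Hg; apply: perpD => //; exact: (DeltaD_CG G _ _ Hg). Qed.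

Definition phi (d a : V) : algC := eps (rep d a) (pi d a).

Lemma inDelta_of (d g : V) : g \in DeltaD d -> g \in (@Delta r) @: [set: W].
Proof. by rewrite inDeltaD => /andP[]. Qed.

Lemma phi_rel (g0 : W) a g : g \in DeltaD (Delta g0) ->
  eps a g * phi (Delta g0) (a + g) = phi (Delta g0) a.
Proof.
move=> Hg; rewrite /phi (rep_add _ _ _ Hg) piD (pi_id _ _ Hg) epsDr.
rewrite [in eps (rep _ a) g]/rep epsDl.
rewrite (eps_DDs _ _ (inDelta_of _ _ (pi_in g0 a)) (inDelta_of _ _ Hg)) mulr1.
by rewrite mulrCA eps_sq mulr1.
Qed.

Lemma eps_neq0 (a b : V) : eps a b != 0.
Proof. by apply/eqP => H; have := eps_sq a b; rewrite H mulr0 => /eqP; rewrite eq_sym oner_eq0. Qed.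

Lemma dimA_eq (G : {set W}) (g0 : W) c :
  dimA G (Delta g0) c =
  #|[set b in CG G | (deg (Delta g0) b == c) && (pi (Delta g0) b == 0)]|.
Proof.
set d := Delta g0.
set S := [set b in CG G | _].
pose n := #|{: V}|.
pose M : 'M[algC]_(#|S|, n) := \matrix_(i, j) ebas (enum_val i) 0 j.
have rowM i : row i M = ebas (enum_val i) by apply/rowP => j; rewrite !mxE.
pose Fm : 'M[algC]_n := \matrix_(i, j)
  (if enum_val j == rep d (enum_val i) then phi d (enum_val i) else 0).
have ebasF a : ebas a *m Fm = phi d a *: ebas (rep d a).
  rewrite /ebas -rowE; apply/rowP => j; rewrite !mxE enum_rankK.
  have -> : (enum_val j == rep d a) = (j == enum_rank (rep d a)).
    by apply/eqP/eqP => [<-|->]; rewrite ?enum_valK ?enum_rankK.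
  by rewrite eqxx /=; case: eqP => _; rewrite ?mulr1 ?mulr0.
have MMT : M *m M^T = 1%:M.
  apply/matrixP => i j; rewrite !mxE.
  rewrite (bigD1 (enum_rank (enum_val i))) //= big1 ?addr0; last first.
    by move=> k Hk; rewrite /M !mxE (negbTE Hk) mul0r.
  rewrite /M !mxE !eqxx /= mul1r.
  by rewrite (inj_eq enum_rank_inj) (inj_eq enum_val_inj).
have rkM : \rank M = #|S|.
  apply/eqP; rewrite eqn_leq rank_leq_row /=.
  by have := mxrankM_maxl M M^T; rewrite MMT mxrank1.
have Kker : (Krel G d <= kermx Fm)%MS.
  apply/sumsmx_subP => a Ha; apply/sumsmx_subP => g Hg; rewrite genmxE sub_kermx.
  rewrite mulmxBl -scalemxAl !ebasF scalerA (rep_add _ _ _ Hg) (phi_rel _ _ _ Hg).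
  by rewrite subrr.
have WcF : (M <= Wdeg G d c *m Fm)%MS.
  apply/row_subP => i; rewrite rowM.
  have : enum_val i \in S := enum_valP i.
  rewrite inE => /andP[Hb /andP[Hc /eqP Hp]].
  have Hrep : rep d (enum_val i) = enum_val i by rewrite /rep Hp addr0.
  have -> : ebas (enum_val i) = ebas (enum_val i) *m Fm.
    by rewrite ebasF /phi Hrep Hp eps0r scale1r.
  apply: submxMr; apply: (sumsmx_sup (enum_val i)); first by rewrite Hb.
  by rewrite genmxE.
have WcK : (Wdeg G d c <= M + Krel G d)%MS.
  apply/sumsmx_subP => a /andP[Ha Hc]; rewrite genmxE.
  have Hpi := pi_in g0 a.
  have Hr0 : rep d a \in S.
    rewrite inE (CG_D _ _ _ _ Ha Hpi) /= pi_rep eqxx andbT.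
    by rewrite /rep degD (deg_DD _ _ Hpi) addr0.
  have H1 : (ebas (rep d a) <= M)%MS.
    by rewrite -(enum_rankK_in Hr0 Hr0) -rowM row_sub.
  have H2 : (eps (rep d a) (pi d a) *: ebas (rep d a + pi d a) - ebas (rep d a)
              <= Krel G d)%MS.
    apply: (sumsmx_sup (rep d a)); first by rewrite (CG_D _ _ _ _ Ha Hpi).
    apply: (sumsmx_sup (pi d a)); first exact: Hpi.
    by rewrite genmxE.
  rewrite rep_pi in H2.
  rewrite -(eqmx_scale _ (eps_neq0 (rep d a) (pi d a))).
  rewrite -(addrNK (ebas (rep d a)) (eps (rep d a) (pi d a) *: ebas a)) addsmxC.
  exact: addmx_sub_adds.
have up : (\rank (Wdeg G d c + Krel G d) <= #|S| + \rank (Krel G d))%N.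
  have Hsub : (Wdeg G d c + Krel G d <= M + Krel G d)%MS.
    by rewrite addsmx_sub WcK addsmxSr.
  apply: leq_trans (mxrankS Hsub) _.
  by rewrite -[in X in (_ <= X)%N]rkM; exact: (mxrank_adds_leqif M (Krel G d)).1.
have h1 := mxrank_mul_ker (Wdeg G d c + Krel G d)%MS Fm.
have h2 : (\rank (Krel G d) <= \rank ((Wdeg G d c + Krel G d) :&: kermx Fm))%N.
  by apply: mxrankS; rewrite sub_capmx addsmxSr Kker.
have h3 : (#|S| <= \rank ((Wdeg G d c + Krel G d)%MS *m Fm))%N.
  rewrite -rkM; apply: mxrankS; apply: submx_trans WcF _; apply: submxMr.
  exact: addsmxSl.
have hK : (\rank (Krel G d) <= \rank (Wdeg G d c + Krel G d))%N.
  by apply: mxrankS; exact: addsmxSr.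
have low : (#|S| + \rank (Krel G d) <= \rank (Wdeg G d c + Krel G d))%N.
  by rewrite -h1; apply: leq_add.
rewrite /dimA; apply/eqP; rewrite eqn_leq leq_subLR addnC up /=.
by rewrite leq_subRL // addnC.

Qed.

Lemma card_Ac (G : {set W}) (g0 : W) (c : V) :
  #|[set b in CG G | deg (Delta g0) b == c]| =
  (#|[set b in CG G | (deg (Delta g0) b == c) && (pi (Delta g0) b == 0%R)]|
    * #|DeltaD (Delta g0)|)%N.
Proof.
set d := Delta g0; rewrite -cardsX.
have inj : injective (fun b : V => (rep d b, pi d b)).
  by move=> x y /(congr1 (fun p => p.1 + p.2)) /=; rewrite !rep_pi.
rewrite -(card_imset _ inj); apply: eq_card => -[x g].
apply/imsetP/idP.
  case=> b; rewrite inE => /andP[Hb Hc] [-> ->].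
  have Hpi := pi_in g0 b.
  rewrite inE /= Hpi andbT inE (CG_D _ _ _ _ Hb Hpi) /= pi_rep eqxx andbT.
  by rewrite /rep degD (deg_DD _ _ Hpi) addr0.
rewrite inE /= => /andP[]; rewrite inE => /andP[Hx /andP[Hc /eqP Hp]] Hg.
exists (x + g).
  by rewrite inE (CG_D _ _ _ _ Hx Hg) degD (deg_DD _ _ Hg) addr0.
rewrite (rep_add _ _ _ Hg) piD (pi_id _ _ Hg) Hp add0r.
by rewrite /rep Hp addr0.
Qed.

Lemma card_DeltaD (g0 : W) : #|DeltaD (Delta g0)| = (2 ^ wl (Delta g0))%N.
Proof.
have -> : wl (Delta g0) = #|suppW g0| by rewrite /wl /Delta row_mxKl.
rewrite -card_powerset.
pose chi (A : {set 'I_r}) : W := \row_i (i \in A)%:R.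
have chiE A i : chi A 0 i = (i \in A)%:R by rewrite mxE.
have inj : injective (fun A => Delta (chi A)).
  move=> A B /(congr1 lsubmx); rewrite /Delta !row_mxKl => H; apply/setP => i.
  have := congr1 (fun u : W => u 0 i) H; rewrite /= !chiE.
  by case: (i \in A); case: (i \in B) => //= /eqP; rewrite ?oner_eq0 // eq_sym oner_eq0.
rewrite -(card_imset _ inj); apply: eq_card => g; rewrite inDeltaD.
apply/andP/imsetP.
  case=> /eqP Hc /imsetP[h _ Hh]; exists (suppW h).
    rewrite powersetE; apply/subsetP => i; rewrite !inE => Hh0.
    move: Hc; rewrite Hh cmul_Delta => /(congr1 lsubmx); rewrite /Delta !row_mxKl.
    move=> /(congr1 (fun u : W => u 0 i)) /=; rewrite mxE => E.
    by apply/eqP => Hg00; move: Hh0; rewrite -E Hg00 mul0r eqxx.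
  rewrite Hh; congr Delta; apply/rowP => i; rewrite chiE inE.
  by case: (F2cases (h 0 i)) => ->; rewrite ?eqxx ?oner_eq0.
case=> A; rewrite powersetE => HA ->; split; last by apply: imset_f; rewrite inE.
rewrite cmul_Delta; apply/eqP; congr Delta; apply/rowP => i; rewrite !mxE.
case: (boolP (i \in A)) => Hi; last by rewrite mulr0.
have := subsetP HA i Hi; rewrite inE => /F2ne0 ->.
by rewrite mul1r.
Qed.

Lemma card_shift (G : {set W}) (d al : V) : al \in CG G ->
  #|[set b in CG G | deg d b == deg d al]| = #|CG G :&: Z2sub d|.
Proof.
move=> Hal; rewrite -(card_imset _ (addIr al)); apply: eq_card => x.
apply/imsetP/idP.
  case=> b; rewrite inE => /andP[Hb /eqP Hc] ->.
  rewrite inE (perpD _ _ _ Hb Hal) Z2sub_deg /= degD Hc rowxx.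
  by rewrite eqxx.
rewrite inE Z2sub_deg => /andP[Hx /eqP Hd]; exists (x + al).
  by rewrite inE (perpD _ _ _ Hx Hal) degD Hd add0r eqxx.
by rewrite -addrA rowxx addr0.
Qed.
End Basics.
Arguments deg {r}.
Arguments pi {r}.
Arguments rep {r}.

Theorem mainTheorem14 (r : nat) (G : {set 'rV['F_2]_r}) :
  (1 <= r)%N ->
  0 \in G -> {in G &, forall x y, x + y \in G} ->
  const_mx 1 \in G ->
  (forall mu : 'rV['F_2]_(r + r) * 'rV['F_2]_(r + r),
     cmul mu.1 mu.2 = 0 ->
     (dimS G mu)%:R =
       \sum_(d in DG G) \sum_(a in CG G)
          (if (d, cmul (dperp d) a) == mu then (2 ^- wl d : algC) else 0))
  /\
  (forall d a, d \in DG G -> a \in CG G ->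
     ((dimS G (d, cmul (dperp d) a))%:R =
        (#|CG G :&: Z2sub d|%:R / #|DeltaD d|%:R : algC))
     /\ ((dimS G (d, cmul (dperp d) a))%:R =
        (2 ^- wl d * #|CG G :&: Z2sub d|%:R : algC))).
Proof.
move=> r1 G0 Gadd G1.
have P2 : forall w : nat, (2 ^+ w : algC) != 0.
  by move=> w; rewrite expf_neq0 // pnatr_eq0.
split.
  case=> d c _ /=; rewrite /dimS /=.
  case: ifP => Hd.
    have [g0 _ Hdg] := imsetP Hd.
    rewrite (bigD1 d) //= [X in _ + X]big1 ?addr0; last first.
      move=> d' /andP[_ Hne]; apply: big1 => a _.
      by rewrite xpair_eqE (negbTE Hne).
    under eq_bigr do rewrite xpair_eqE eqxx /=.
    rewrite -big_mkcondr sumr_const Hdg (dimA_eq _ G g0 c).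
    have -> : #|[pred a | (a \in CG G) & cmul (dperp (Delta g0)) a == c]| =
              #|[set b in CG G | deg (Delta g0) b == c]|.
      by apply: eq_card => x; rewrite !inE.
    rewrite card_Ac card_DeltaD -(mulr_natr (2 ^- _)) natrM natrX mulrCA mulVf ?mulr1 //.
  rewrite big1 // => d' Hd'; apply: big1 => a _.
  have Hne : d' != d by apply/eqP => E; rewrite -E Hd' in Hd.
  by rewrite xpair_eqE (negbTE Hne).
move=> d a Hd Ha; rewrite /dimS /= Hd.
have [g0 _ ->] := imsetP Hd.
rewrite (dimA_eq _ G g0).
have E := card_Ac _ G g0 (deg (Delta g0) a).
rewrite (card_shift _ G _ _ Ha) card_DeltaD in E.
rewrite E card_DeltaD; split.
  by rewrite natrM mulfK // natrX.
by rewrite natrM natrX mulrCA mulVf ?mulr1.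
Qed.
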